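(* Let $1\le m<n$, let $\mathbf{b}\in\{0,1\}^{n-m}$ with $\mathbf{b}\neq\mathbf{0}_{n-m}$, and let $y\in\mathbb{Q}[t]$. The map \[\mathrm{Tot}(\mathcal{L}^{\mathbb{Q}}_{T^m}(\mathbb{Q}[t];\mathbb{Q}))\to\mathrm{Tot}(\mathcal{L}^{\mathbb{Q}}_{T^n}(\mathbb{Q}[t];\mathbb{Q})),\qquad c\mapsto c_{(-,\mathbf{0})}\otimes y_{(\mathbf{0},\mathbf{b})}\] is a chain map.
   Context: The $n$-chain complex $C^{(n)}=\mathcal{L}^{\mathbb{Q}}_{T^n}(\mathbb{Q}[t];\mathbb{Q})$: in multi-degree $\mathbf{V}=(v_1,\dots,v_n)\in\mathbb{N}^n$, elements are sums of multi-matrices of size $(v_1+1)\times\cdots\times(v_n+1)$ with entries in $\mathbb{Q}[t]$ at coordinates $\mathbf{v}\ne\mathbf{0}_n$ ($\mathbf{0}\le\mathbf{v}\le\mathbf{V}$) and an entry in $\mathbb{Q}$ at $\mathbf{0}_n$ (tensor products over $\mathbb{Q}$; $\mathbb{Q}$ is a $\mathbb{Q}[t]$-module via $t\mapsto0$). In direction $i$ the slices are indexed by $j\in\{0,\dots,v_i\}$; $d_{i,j}$ ($j<v_i$) multiplies slices $j$ and $j+1$ entrywise into one slice and $d_{i,v_i}$ multiplies slice $v_i$ into slice $0$. With $\mathrm{d}_i=\sum_j(-1)^jd_{i,j}$, the total complex has differential $\mathrm{d}=\sum_i(-1)^{v_1+\cdots+v_{i-1}}\mathrm{d}_i$. $\mathbf{0}_k,\mathbf{1}_k$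 are constant vectors of length $k$. For a multi-matrix $c$ in multi-degree $\mathbf{W}\in\mathbb{N}^m$ with entries $c_{\mathbf{a}}$, $c_{(-,\mathbf{0})}\otimes y_{(\mathbf{0},\mathbf{b})}$ is the multi-matrix in multi-degree $(\mathbf{W},\mathbf{1}_{n-m})$ with $c_{\mathbf{a}}$ at coordinate $(\mathbf{a},\mathbf{0}_{n-m})$, $y$ at coordinate $(\mathbf{0}_m,\mathbf{b})$, and $1$ elsewhere; the map is extended linearly. *)

(* Defs.v *)
From HB Require Import structures.
From mathcomp Require Import all_boot all_order all_algebra.
From mathcomp Require Import mpoly.
Set Implicit Arguments. Unset Strict Implicit. Unset Printing Implicit Defensive.
Import Order.TTheory GRing.Theory Num.Theory.
Local Open Scope ring_scope.

Definition deg (n : nat) := {ffun 'I_n -> nat}.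

(* Coordinates v with 0 <= v <= V of the multi-matrix of multi-degree V. *)
Definition Coord n (V : deg n) := {dffun forall i : 'I_n, 'I_(V i).+1}.
Definition czero n (V : deg n) : Coord V := [ffun i => ord0].
(* Nonzero coordinates: those carrying a Q[t]-entry. *)
Definition NZ n (V : deg n) := {x : Coord V | x != czero V}.
Definition nv n (V : deg n) := #|{: NZ V}|.

(* The module in multi-degree V:
   Q (x) Q[t]^{(x) (nonzero coordinates)}  ~=  Q[t_v : v nonzero coordinate],
   an elementary tensor  x_0 (x) (x)_v x_v  being  x_0 * prod_v x_v(t_v). *)
Definition C n (V : deg n) := {mpoly rat[nv V]}.

(* The variable t_v at a coordinate v; at the zero coordinate (the Q-entry,
   where t acts by 0) the "variable" is 0. *)
Definition Xc n (V : deg n) (x : Coord V) : C V :=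
  match (insub x : option (NZ V)) with
  | Some x' => 'X_(enum_rank x')
  | None => 0
  end.

(* The algebra map induced by a map of coordinates (multiplying entries
   sent to the same coordinate). *)
Definition cmap n (V : deg n) n' (V' : deg n') (phi : Coord V -> Coord V')
  (p : C V) : C V' :=
  comp_mpoly [tuple Xc (phi (val (enum_val l))) | l < nv V] p.

Definition up n (i : 'I_n) (U : deg n) : deg n := [ffun l => U l + (l == i)].

(* In direction i, from slice index range 0..v (v = U i + 1) to 0..v-1:
   j < v : merge slices j and j+1 ;  j = v : merge slice v into slice 0. *)
Definition faceidx (v j c : nat) : nat :=
  if (j < v)%N then (if (c <= j)%N then c else c.-1) else (if c == v then 0%N else c).

Definition phi n (i : 'I_n) (j : nat) (U : deg n) (x : Coord (up i U)) : Coord U :=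
  [ffun l => inord (if l == i then faceidx (U i).+1 j (x l) else x l)].

Definition face n (i : 'I_n) (j : nat) (U : deg n) (p : C (up i U)) : C U :=
  cmap (@phi n i j U) p.

Definition dir n (i : 'I_n) (U : deg n) (p : C (up i U)) : C U :=
  \sum_(j < (U i).+2) (-1) ^+ j * @face n i j U p.

(* Families of elements, one in each multi-degree; the elements of
   Tot_k are the families supported on multi-degrees of total degree k
   (a finite set, so the direct sum is this product). *)
Definition fam n := forall V : deg n, C V.
Definition inTot n (k : nat) (x : fam n) : Prop :=
  forall V : deg n, (\sum_(i < n) V i)%N != k -> x V = 0.

Definition dtot n (x : fam n) : fam n := fun U =>
  \sum_(i < n) (-1) ^+ (\sum_(l < n | (l < i)%N) U l) * @dir n i U (x (up i U)).

Definition restr m n (U : deg n) : deg m :=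
  [ffun i : 'I_m => if (insub (val i) : option 'I_n) is Some j then U j else 0%N].

Definition emb m n (U : deg n) (a : Coord (restr m U)) : Coord U :=
  [ffun k => inord (if (insub (val k) : option 'I_m) is Some i then val (a i) else 0%N)].

Definition bcoord m n (b : (n - m).-tuple bool) (U : deg n) : Coord U :=
  [ffun k => inord (if (m <= val k)%N then nat_of_bool (nth false b (val k - m)) else 0%N)].

Definition Fmap m n (b : (n - m).-tuple bool) (y : {poly rat}) (x : fam m) : fam n :=
  fun U =>
    if [forall k : 'I_n, (m <= val k)%N ==> (U k == 1%N)] then
      cmap (@emb m n U) (x (restr m U)) *
        (map_poly (@mpolyC _ rat) y).[Xc (bcoord b U)]
    else 0.

(* Main.v *)
Require Import Defs.
From HB Require Import structures.
From mathcomp Require Import all_boot all_order all_algebra.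
From mathcomp Require Import mpoly.
From mathcomp Require Import zify.
From Stdlib Require Import Lia FunctionalExtensionality.
Set Implicit Arguments. Unset Strict Implicit. Unset Printing Implicit Defensive.
Import Order.TTheory GRing.Theory Num.Theory.
Local Open Scope ring_scope.


Lemma Xc0 n (V : deg n) : Xc (czero V) = 0.
Proof. by rewrite /Xc insubF // eqxx. Qed.

Lemma cmapXc n (V : deg n) n' (V' : deg n') (f : Coord V -> Coord V') w :
  f (czero V) = czero V' -> cmap f (Xc w) = Xc (f w).
Proof.
move=> f0; rewrite /Xc; case: insubP => [w' nz <-|].
  by rewrite /cmap comp_mpolyXU -tnth_nth tnth_mktuple enum_rankK /Xc.
rewrite negbK => /eqP ->; rewrite /cmap comp_mpoly0 f0.
by rewrite insubF // eqxx.
Qed.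

Lemma cmapD n (V : deg n) n' (V' : deg n') (f : Coord V -> Coord V') p q :
  cmap f (p + q) = cmap f p + cmap f q.
Proof. exact: comp_mpolyD. Qed.
Lemma cmapZ n (V : deg n) n' (V' : deg n') (f : Coord V -> Coord V') c p :
  cmap f (c *: p) = c *: cmap f p.
Proof. exact: comp_mpolyZ. Qed.
Lemma cmap0 n (V : deg n) n' (V' : deg n') (f : Coord V -> Coord V') :
  cmap f 0 = 0.
Proof. exact: comp_mpoly0. Qed.
Lemma cmapMX n (V : deg n) n' (V' : deg n') (f : Coord V -> Coord V') mm :
  cmap f 'X_[mm] = \prod_(i < nv V) Xc (f (val (enum_val i))) ^+ mm i.
Proof. by rewrite /cmap comp_mpolyX; apply: eq_bigr => i _; rewrite tnth_mktuple. Qed.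

Lemma cmap_comp n1 (V1 : deg n1) n2 (V2 : deg n2) n3 (V3 : deg n3)
  (f : Coord V2 -> Coord V3) (g : Coord V1 -> Coord V2) p :
  f (czero V2) = czero V3 -> cmap f (cmap g p) = cmap (f \o g) p.
Proof.
move=> f0; elim/mpolyind: p => [|c mm p _ _ IH].
  by rewrite !cmap0.
rewrite !cmapD !cmapZ IH; congr (_ *: _ + _).
rewrite !cmapMX {1}/cmap rmorph_prod; apply: eq_bigr => i _.
rewrite rmorphXn; congr (_ ^+ _); exact: (cmapXc _ f0).
Qed.

Lemma eq_cmap n (V : deg n) n' (V' : deg n') (f g : Coord V -> Coord V') p :
  f =1 g -> cmap f p = cmap g p.
Proof. by move=> fg; rewrite /cmap; congr comp_mpoly; apply: eq_mktuple => l; rewrite fg. Qed.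

Lemma cmapM n (V : deg n) n' (V' : deg n') (f : Coord V -> Coord V') p q :
  cmap f (p * q) = cmap f p * cmap f q.
Proof. by rewrite /cmap rmorphM. Qed.

Lemma cmap_horner n (V : deg n) n' (V' : deg n') (f : Coord V -> Coord V') y w :
  f (czero V) = czero V' ->
  cmap f (map_poly (@mpolyC _ rat) y).[Xc w] = (map_poly (@mpolyC _ rat) y).[Xc (f w)].
Proof.
move=> f0; rewrite /cmap -horner_map /= -map_poly_comp -/(cmap _ _) cmapXc //.
by congr (_.[_]); apply: eq_map_poly => c /=; rewrite comp_mpolyC.
Qed.


Definition embW m n (U : deg n) (W : deg m) (a : Coord W) : Coord U :=
  [ffun k => inord (if (insub (val k) : option 'I_m) is Some i then val (a i) else 0%N)].

Lemma inordE N e : val (@inord N e) = if (e <= N)%N then e else 0%N.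
Proof. by rewrite /inord val_insubd ltnS. Qed.

Lemma faceidx_le v j c : (0 < v)%N -> (c <= v)%N -> (faceidx v j c <= v.-1)%N.
Proof.
rewrite /faceidx; case: v => // v _ cv /=.
case: ifP => hj; case: ifP => hc; move: hj hc cv; try move/eqP; lia.
Qed.

Lemma faceidx0 v j : (0 < v)%N -> faceidx v j 0 = 0%N.
Proof. by rewrite /faceidx; case: v => // v _; case: ifP. Qed.

Lemma phiE n (i : 'I_n) j (U : deg n) (x : Coord (up i U)) l :
  val (@phi n i j U x l) =
  val (@inord (U l) (if l == i then faceidx (U i).+1 j (x l) else x l)).
Proof. by rewrite /phi ffunE. Qed.

Lemma upE n (i : 'I_n) (U : deg n) l : up i U l = (U l + (l == i))%N.
Proof. by rewrite ffunE. Qed.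

Section Coords.
Variables (m n : nat) (le : (m <= n)%N).

Lemma restrE (U : deg n) (i : 'I_m) : restr m U i = U (widen_ord le i).
Proof.
rewrite ffunE; case: insubP => [i' _ e|]; first by congr (U _); apply/val_inj.
by rewrite /= (leq_trans (ltn_ord i) le).
Qed.

Lemma restr_up (U : deg n) (i : 'I_m) :
  restr m (up (widen_ord le i) U) = up i (restr m U).
Proof.
apply/ffunP => l; rewrite restrE /up ffunE [in RHS]ffunE -/(restr m U l) restrE; congr (_ + _)%N.
Qed.

Lemma embW_lo (U : deg n) (W : deg m) (a : Coord W) (k : 'I_m) :
  embW U a (widen_ord le k) = inord (val (a k)).
Proof. by rewrite ffunE /= valK. Qed.

Lemma embW_hi (U : deg n) (W : deg m) (a : Coord W) (k : 'I_n) :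
  (m <= k)%N -> val (embW U a k) = 0%N.
Proof. by move=> hk; rewrite ffunE insubF ?inordE //= ltnNge hk. Qed.


Lemma phi_commute (U : deg n) (i : 'I_m) (j : nat) (a : Coord (up i (restr m U))) :
  @phi n (widen_ord le i) j U (embW (up (widen_ord le i) U) a)
  = embW U (@phi m i j (restr m U) a).
Proof.
apply/ffunP => k; apply/val_inj.
have [hk|hk] := ltnP k m; last first.
  have -> : k = Ordinal (ltn_ord k) by apply/val_inj.
  have ne : (Ordinal (ltn_ord k) == widen_ord le i) = false.
    by apply/negbTE; rewrite -val_eqE /= neq_ltn (leq_trans (ltn_ord i) hk) orbT.
  by rewrite phiE ne !inordE !embW_hi.
  have -> : k = widen_ord le (Ordinal hk) by apply/val_inj.
  set k' := Ordinal hk.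
  rewrite [in RHS]embW_lo !inordE !phiE embW_lo !inordE.
  have := ltn_ord (a k').
  move: (a k') => c; rewrite -[\val c]/(nat_of_ord c); move: (nat_of_ord c) => c0.
  rewrite !upE !restrE.
  have ew : (widen_ord le k' == widen_ord le i) = (val k == val i) by rewrite -val_eqE.
  have ek : (k' == i) = (val k == val i) by rewrite -val_eqE.
  rewrite ew ?ek.
  case: eqP => [ei|ne]; last by rewrite addn0 ltnS => hc; rewrite hc hc.
  have ei' : widen_ord le k' = widen_ord le i by apply/val_inj.
  rewrite ei' addn1 !ltnS => hc; rewrite hc.
  have hf := faceidx_le j (ltn0Sn _) hc; rewrite /= in hf.
  by rewrite hf hf.
Qed.

End Coords.

Lemma czeroE n (V : deg n) l : val (czero V l) = 0%N.
Proof. by rewrite ffunE. Qed.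

Lemma phi_czero n (i : 'I_n) j (U : deg n) :
  @phi n i j U (czero (up i U)) = czero U.
Proof.
apply/ffunP => l; apply/val_inj; rewrite phiE !czeroE faceidx0 // if_same inordE.
by rewrite ?if_same.
Qed.

Lemma embW_czero m n (U : deg n) (W : deg m) : embW U (czero W) = czero U.
Proof.
apply/ffunP => l; apply/val_inj; rewrite czeroE ffunE inordE.
by case: insub => [l'|]; rewrite ?czeroE.
Qed.

Lemma phi01 n (i : 'I_n) (U : deg n) x : U i = 0%N ->
  @phi n i 0 U x = @phi n i 1 U x.
Proof.
move=> U0; apply/ffunP => l; apply/val_inj; rewrite !phiE; case: eqP => [->|//].
have := ltn_ord (x i); move: (nat_of_ord (x i)) => c.
rewrite upE eqxx U0 /faceidx /=.
by case: c => [|[|c]].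
Qed.

Lemma bcoordE m n (b : (n - m).-tuple bool) (U : deg n) l :
  val (@bcoord m n b U l) =
  val (@inord (U l) (if (m <= val l)%N then nat_of_bool (nth false b (val l - m)) else 0%N)).
Proof. by rewrite ffunE. Qed.

Lemma phi_bcoord m n (le : (m <= n)%N) (b : (n - m).-tuple bool) (i : 'I_m) j (U : deg n) :
  @phi n (widen_ord le i) j U (@bcoord m n b (up (widen_ord le i) U)) = @bcoord m n b U.
Proof.
apply/ffunP => l; apply/val_inj; rewrite phiE !bcoordE !inordE upE.
case: eqP => [el|ne].
  have hl : (m <= val l)%N = false by rewrite el /= leqNgt ltn_ord.
  by rewrite hl /= faceidx0 // !if_same.
rewrite addn0; set e := (if (m <= \val l)%N then _ else _).
case: (leqP e (U l)) => h; last by []. by case: ifP => // /negP [].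

Qed.


Definition cond m n (U : deg n) := [forall k : 'I_n, (m <= val k)%N ==> (U k == 1%N)].

Lemma FmapE m n (b : (n - m).-tuple bool) y (x : fam m) (U : deg n) :
  Fmap b y x U = if cond m U then cmap (@emb m n U) (x (restr m U)) *
        (map_poly (@mpolyC _ rat) y).[Xc (@bcoord m n b U)] else 0.
Proof. by []. Qed.

Lemma dir0 n (i : 'I_n) (U : deg n) : @dir n i U 0 = 0.
Proof. by rewrite /dir big1 // => j _; rewrite /face cmap0 mulr0. Qed.

Lemma cmap_signM n (V : deg n) n' (V' : deg n') (f : Coord V -> Coord V') j p :
  cmap f ((-1) ^+ j * p) = (-1) ^+ j * cmap f p.
Proof. by rewrite /cmap rmorphM rmorphXn rmorphN rmorph1. Qed.

Lemma cmap_sum n (V : deg n) n' (V' : deg n') (f : Coord V -> Coord V') I (r : seq I) P F :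
  cmap f (\sum_(i <- r | P i) F i) = \sum_(i <- r | P i) cmap f (F i).
Proof. by rewrite /cmap rmorph_sum. Qed.

Lemma sum_bound N1 N2 (F : nat -> {mpoly rat[N1]}) : N1 = N2 -> True.
Proof. by []. Qed.

Lemma eq_sum_bound (R : nmodType) N1 N2 (F : nat -> R) : N1 = N2 ->
  \sum_(j < N1) F j = \sum_(j < N2) F j.
Proof. by move=> ->. Qed.

Section Main.
Variables (m n : nat) (hmn : (m < n)%N) (b : (n - m).-tuple bool) (y : {poly rat}) (x : fam m).
Let le := ltnW hmn.

Lemma cond_up (i : 'I_m) (U : deg n) : cond m (up (widen_ord le i) U) = cond m U.
Proof.
apply: eq_forallb => k; case: (leqP m k) => //= hk.
rewrite upE; have -> : (k == widen_ord le i) = false.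
  by apply/negbTE; rewrite -val_eqE /= neq_ltn (leq_trans (ltn_ord i) hk) orbT.
by rewrite addn0.
Qed.

Lemma F2 (i : 'I_n) (U : deg n) : (m <= i)%N -> @dir n i U (Fmap b y x (up i U)) = 0.
Proof.
move=> hi; have [U0|Un0] := eqVneq (U i) 0%N.
  rewrite /dir U0 !big_ord_recl big_ord0 /=.
  have -> : @face n i 1 U (Fmap b y x (up i U)) = @face n i 0 U (Fmap b y x (up i U)).
    by apply: eq_cmap => z; rewrite phi01.
  by rewrite expr0 expr1 mul1r mulN1r addr0 subrr.
rewrite FmapE; case: ifP => [/forallP /(_ i)|]; last by rewrite dir0.
rewrite hi upE eqxx /= addn1 eqSS => /eqP U0; by rewrite U0 eqxx in Un0.
Qed.

Lemma F3 (i : 'I_m) (U : deg n) : cond m U ->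
  @dir n (widen_ord le i) U (Fmap b y x (up (widen_ord le i) U)) =
  cmap (@emb m n U) (@dir m i (restr m U) (x (up i (restr m U)))) *
        (map_poly (@mpolyC _ rat) y).[Xc (@bcoord m n b U)].
Proof.
move=> hc; rewrite FmapE cond_up hc.
change (cmap (@emb m n (up (widen_ord le i) U)) (x (restr m (up (widen_ord le i) U))))
  with (cmap (@embW m n (up (widen_ord le i) U) (restr m (up (widen_ord le i) U)))
         (x (restr m (up (widen_ord le i) U)))).
rewrite (restr_up le U i).
rewrite /dir [in RHS]cmap_sum [in RHS]mulr_suml -(restrE le U i).
apply: eq_bigr => j _.
rewrite cmap_signM -mulrA; congr (_ * _).
rewrite /face cmapM cmap_horner ?phi_czero // phi_bcoord; congr (_ * _).
rewrite !cmap_comp ?phi_czero //; last exact: embW_czero.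
by apply: eq_cmap => z /=; rewrite phi_commute.
Qed.

Lemma sign_eq (i : 'I_m) (U : deg n) :
  (\sum_(l < n | (l < widen_ord le i)%N) U l)%N = (\sum_(l < m | (l < i)%N) restr m U l)%N.
Proof.
rewrite (eq_bigl (fun l : 'I_n => ((l < widen_ord le i) && (l < m))%N)); last first.
  by move=> l /=; apply/esym/andb_idr => h; exact: ltn_trans h (ltn_ord i).
rewrite (big_ord_narrow_cond le); apply: eq_bigr => l _; by rewrite restrE.
Qed.

Lemma main_eq (U : deg n) : Fmap b y (dtot x) U = dtot (Fmap b y x) U.
Proof.
rewrite [LHS]FmapE /dtot; case: ifP => hc.
  rewrite cmap_sum mulr_suml (bigID (fun i : 'I_n => (i < m)%N)) /=.
  rewrite [X in _ = _ + X]big1 ?addr0; last first.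
    by move=> i hi; rewrite F2 ?mulr0 // leqNgt.
  rewrite (big_ord_narrow le); apply: eq_bigr => i _.
  by rewrite F3 // sign_eq cmap_signM mulrA.
rewrite big1 // => i _; case: (ltnP i m) => hi; last by rewrite F2 ?mulr0.
have -> : i = widen_ord le (Ordinal hi) by apply/val_inj.
by rewrite FmapE cond_up hc dir0 mulr0.
Qed.

Lemma main_tot k : inTot k x -> inTot (k + (n - m)) (Fmap b y x).
Proof.
move=> hx V hV; rewrite FmapE; case: ifP => // /forallP hc.
rewrite hx ?cmap0 ?mul0r //; apply: contra hV => /eqP <-.
rewrite (bigID (fun i : 'I_n => (i < m)%N)) /= (big_ord_narrow le).
apply/eqP; congr (_ + _)%N.
  by apply: eq_bigr => i _; rewrite restrE.
rewrite (eq_big (fun i : 'I_n => (m <= i)%N) (fun=> 1%N)); first last.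
- by move=> i; rewrite -leqNgt => hi; move: (hc i); rewrite hi => /eqP.
- by move=> i; rewrite -leqNgt.
rewrite (eq_bigl (fun i : 'I_n => xpredT i && (m <= i)%N)) //.
by rewrite -(big_geq_mkord m n xpredT (fun=> 1%N)) sum_nat_const_nat muln1.
Qed.

End Main.

Local Close Scope ring_scope.

Theorem lemma4p7 (m n : nat) (hm : (1 <= m)%N) (hmn : (m < n)%N)
  (b : (n - m).-tuple bool) (hb : (b : seq bool) != nseq (n - m) false)
  (y : {poly rat}) (k : nat) (x : fam m) (hx : inTot k x) :
  inTot (k + (n - m)) (Fmap b y x) /\
  Fmap b y (dtot x) = dtot (Fmap b y x).
Proof.
split; first exact: main_tot.
apply: functional_extensionality_dep => U; exact: main_eq.
Qed.
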